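(* Let $G$ be a locally finite graph and $F$ a subgraph of $G$. If $F$ is faithful to $G$, then the line graph $L(F)$ is faithful to the line graph $L(G)$.
   Context: $L(H)$ is the line graph of $H$ (vertices are edges of $H$, adjacent when sharing an endpoint); $L(F)$ is naturally a subgraph of $L(G)$. A ray is a one-way infinite path; two rays of a graph $H$ are equivalent in $H$ if for every finite $S\subseteq V(H)$ some component of $H-S$ contains tails of both; the classes are the ends of $H$. A subgraph $A$ of $B$ is faithful to $B$ if (i) every end of $B$ contains a ray of $A$, and (ii) any two rays of $A$ are equivalent in $A$ if and only if they are equivalent in $B$. *)

(* Defs.v *)
From Stdlib Require Import List Relations.
Set Implicit Arguments.

Record graph (T : Type) := Graph { vtx : T -> Prop; adj : T -> T -> Prop }.

Definition is_graph T (H : graph T) : Prop :=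
  (forall x y, adj H x y -> adj H y x) /\
  (forall x, ~ adj H x x) /\
  (forall x y, adj H x y -> vtx H x /\ vtx H y).

Definition locally_finite T (H : graph T) : Prop :=
  forall v, vtx H v -> exists l : list T, forall w, adj H v w -> In w l.

Definition subgraph T (A B : graph T) : Prop :=
  (forall x, vtx A x -> vtx B x) /\ (forall x y, adj A x y -> adj B x y).

Definition is_edge T (H : graph T) (e : T -> Prop) : Prop :=
  exists x y, adj H x y /\ e = (fun z => z = x \/ z = y).

Definition line_graph T (H : graph T) : graph (T -> Prop) :=
  {| vtx := is_edge H;
     adj := fun e f => is_edge H e /\ is_edge H f /\ e <> f /\ exists x, e x /\ f x |}.

Definition is_ray T (H : graph T) (r : nat -> T) : Prop :=
  (forall n, vtx H (r n)) /\
  (forall n, adj H (r n) (r (S n))) /\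
  (forall m n, r m = r n -> m = n).

(* x lies in the component of H - S containing v (v, x vertices of H - S). *)
Definition avoid_adj T (H : graph T) (S : list T) : relation T :=
  fun x y => adj H x y /\ ~ In x S /\ ~ In y S.

Definition in_comp T (H : graph T) (S : list T) (v x : T) : Prop :=
  vtx H x /\ ~ In x S /\ clos_refl_trans T (avoid_adj H S) v x.

Definition tail_in_comp T (H : graph T) (S : list T) (v : T) (r : nat -> T) : Prop :=
  exists k, forall n, k <= n -> in_comp H S v (r n).

Definition ray_equiv T (H : graph T) (r s : nat -> T) : Prop :=
  forall S : list T, (forall x, In x S -> vtx H x) ->
    exists v, vtx H v /\ ~ In v S /\ tail_in_comp H S v r /\ tail_in_comp H S v s.

(* A is faithful to B: (i) every end of B contains a ray of A;
   (ii) rays of A are equivalent in A iff they are equivalent in B. *)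
Definition faithful T (A B : graph T) : Prop :=
  (forall r, is_ray B r -> exists r', is_ray A r' /\ ray_equiv B r' r) /\
  (forall r s, is_ray A r -> is_ray A s -> (ray_equiv A r s <-> ray_equiv B r s)).

(* Main.v *)
Require Import Defs.
From Stdlib Require Import List Relations Classical FunctionalExtensionality PropExtensionality ClassicalEpsilon Lia Arith.

Definition edg {T : Type} (x y : T) : T -> Prop := fun z => z = x \/ z = y.
Definition Eray {T : Type} (r : nat -> T) : nat -> T -> Prop := fun n => edg (r n) (r (S n)).

Lemma pred_ext {T : Type} (e f : T -> Prop) : (forall z, e z <-> f z) -> e = f.
Proof. intro H. apply functional_extensionality; intro z. apply propositional_extensionality. apply H. Qed.

Lemma edg_sym {T : Type} (x y : T) : edg x y = edg y x.
Proof. apply pred_ext; unfold edg; intuition. Qed.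

Lemma edge_two {T} (H : graph T) e x y : is_edge H e -> e x -> e y -> x <> y -> e = edg x y.
Proof.
  intros [a [b [Hab ->]]] Hx Hy Hxy. apply pred_ext; intro z; unfold edg.
  destruct Hx as [-> | ->]; destruct Hy as [-> | ->]; try congruence; intuition.
Qed.

Lemma crt_sym {A} (R : relation A) : (forall x y, R x y -> R y x) ->
  forall x y, clos_refl_trans A R x y -> clos_refl_trans A R y x.
Proof.
  intros Hs x y H; induction H.
  - apply rt_step; auto.
  - apply rt_refl.
  - eapply rt_trans; eauto.
Qed.

Lemma avoid_sym {T} (H : graph T) X : (forall x y, adj H x y -> adj H y x) ->
  forall x y, avoid_adj H X x y -> avoid_adj H X y x.
Proof. intros Hs x y [A [B C]]. split; [auto | split; auto]. Qed.

Lemma ray_equiv_sym {T} (H : graph T) r s : ray_equiv H r s -> ray_equiv H s r.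
Proof. intros Hrs X HX. destruct (Hrs X HX) as [v [Hv [HvS [A B]]]]. exists v; auto. Qed.

Lemma ray_equiv_trans {T} (H : graph T) r s t : (forall x y, adj H x y -> adj H y x) ->
  ray_equiv H r s -> ray_equiv H s t -> ray_equiv H r t.
Proof.
  intros Hsym Hrs Hst X HX.
  destruct (Hrs X HX) as [v [Hv [HvS [[k1 Hr] [k2 Hs]]]]].
  destruct (Hst X HX) as [w [Hw [HwS [[k3 Hs'] [k4 Ht]]]]].
  exists v. split; [exact Hv|split; [exact HvS|split]].
  - exists k1; exact Hr.
  - exists k4. intros n Hn. destruct (Ht n Hn) as [A [B C]].
    split; [exact A|split; [exact B|]].
    destruct (Hs (Nat.max k2 k3) (Nat.le_max_l _ _)) as [_ [_ P1]].
    destruct (Hs' (Nat.max k2 k3) (Nat.le_max_r _ _)) as [_ [_ P2]].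
    eapply rt_trans; [exact P1|]. eapply rt_trans; [|exact C].
    apply crt_sym; [apply avoid_sym; exact Hsym | exact P2].
Qed.

Lemma ray_tail_avoid {T} (H : graph T) R : is_ray H R -> forall X : list T,
  exists k, forall n, k <= n -> ~ In (R n) X.
Proof.
  intros [_ [_ Hinj]] X. induction X as [|a X [k Hk]].
  - exists 0; intros n _ [].
  - destruct (classic (exists m, R m = a)) as [[m Hm]|Hno].
    + exists (Nat.max k (S m)). intros n Hn [Ha|Hin].
      * rewrite Ha in Hm. apply Hinj in Hm. lia.
      * apply (Hk n); [lia|exact Hin].
    + exists k. intros n Hn [Ha|Hin]; [apply Hno; eauto | apply (Hk n); auto].
Qed.

Lemma ray_tail_comp {T} (H : graph T) R X k : is_ray H R ->
  (forall n, k <= n -> ~ In (R n) X) ->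
  forall n, k <= n -> in_comp H X (R k) (R n).
Proof.
  intros [Hv [Ha _]] Hk.
  assert (Hd : forall d, clos_refl_trans T (avoid_adj H X) (R k) (R (k + d))).
  { induction d. rewrite Nat.add_0_r; apply rt_refl.
    eapply rt_trans; [exact IHd|]. apply rt_step. rewrite Nat.add_succ_r.
    split; [apply Ha | split; apply Hk; lia]. }
  intros n Hn. split; [apply Hv|split; [apply Hk; lia|]].
  replace n with (k + (n - k)) by lia. apply Hd.
Qed.

Lemma ray_equiv_subseq {T} (H : graph T) R phi : is_ray H R -> (forall n, n <= phi n) ->
  ray_equiv H R (fun n => R (phi n)).
Proof.
  intros HR Hphi X _. destruct (ray_tail_avoid H R HR X) as [k Hk].
  exists (R k). split; [apply (proj1 HR)|split; [apply Hk; lia|split]].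
  - exists k. apply ray_tail_comp; auto.
  - exists k. intros n Hn. apply ray_tail_comp; auto. specialize (Hphi n); lia.
Qed.

Lemma lg_sym {T} (H : graph T) : forall e f, adj (line_graph H) e f -> adj (line_graph H) f e.
Proof.
  intros e f [A [B [C [x [D E]]]]].
  split; [exact B|split; [exact A|split; [intro Heq; apply C; symmetry; exact Heq| exists x; split; assumption]]].
Qed.

Lemma lg_is_graph {T} (H : graph T) : is_graph (line_graph H).
Proof.
  split; [apply lg_sym|split].
  - intros x [_ [_ [C _]]]; apply C; reflexivity.
  - intros x y [A [B _]]; split; assumption.
Qed.

Lemma edge_vtx {T} (H : graph T) e z : is_graph H -> is_edge H e -> e z -> vtx H z.
Proof.
  intros [_ [_ Hv]] [a [b [Hab ->]]] Hz; destruct (Hv a b Hab); destruct Hz as [->| ->]; assumption.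
Qed.

Lemma Eray_ray {T} (H : graph T) r : is_ray H r -> is_ray (line_graph H) (Eray r).
Proof.
  intros [Hv [Ha Hi]].
  assert (HE : forall n, is_edge H (Eray r n)).
  { intro n; exists (r n), (r (S n)); split; [apply Ha|reflexivity]. }
  split; [exact HE|split].
  - intro n.
    change (is_edge H (Eray r n) /\ is_edge H (Eray r (S n)) /\ Eray r n <> Eray r (S n) /\
            exists x, Eray r n x /\ Eray r (S n) x).
    split; [apply HE|split; [apply HE|split]].
    + intro Heq. assert (E0 : Eray r (S n) (r n)) by (rewrite <- Heq; left; reflexivity).
      cbv [Eray edg] in E0. destruct E0 as [E1|E1]; apply Hi in E1; lia.
    + exists (r (S n)). split; [right; reflexivity | left; reflexivity].
  - intros m n Heq.
    assert (A : Eray r n (r m)) by (rewrite <- Heq; left; reflexivity).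
    assert (B : Eray r n (r (S m))) by (rewrite <- Heq; right; reflexivity).
    cbv [Eray edg] in A, B.
    destruct A as [A|A]; destruct B as [B|B]; apply Hi in A; apply Hi in B; lia.
Qed.

Lemma endpoints_list {T} (H : graph T) (X : list (T -> Prop)) : is_graph H ->
  (forall e, In e X -> is_edge H e) ->
  exists SV, (forall z, In z SV -> vtx H z) /\ (forall e z, In e X -> e z -> In z SV).
Proof.
  intros HG. induction X as [|e X IH]; intros HX.
  - exists nil. split; [intros z []| intros e z []].
  - destruct IH as [SV [H1 H2]]. { intros f Hf; apply HX; right; exact Hf. }
    destruct (HX e (or_introl eq_refl)) as [a [b [Hab ->]]].
    destruct HG as [_ [_ Hv]]. destruct (Hv a b Hab) as [Ha Hb].
    exists (a :: b :: SV). split.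
    + intros z [<-|[<-|Hz]]; auto.
    + intros f z [<-|Hf] Hz.
      * destruct Hz as [->| ->]; simpl; auto.
      * right; right; eapply H2; eauto.
Qed.

Lemma notinS_of {T} (X : list (T -> Prop)) SV e a :
  (forall e z, In e X -> e z -> In z SV) -> e a -> ~ In a SV -> ~ In e X.
Proof. intros HX Ha Hn Hin. apply Hn. eapply HX; eauto. Qed.

Lemma share_path {T} (H : graph T) X SV e f a :
  (forall e z, In e X -> e z -> In z SV) -> is_edge H e -> is_edge H f -> e a -> f a -> ~ In a SV ->
  clos_refl_trans _ (avoid_adj (line_graph H) X) e f.
Proof.
  intros HX He Hf Hea Hfa Hn. destruct (classic (e = f)) as [<-|Hne]; [apply rt_refl|].
  apply rt_step. split; [|split].
  - change (is_edge H e /\ is_edge H f /\ e <> f /\ exists x, e x /\ f x).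
    split; [exact He|split; [exact Hf|split; [exact Hne|exists a; split; assumption]]].
  - eapply notinS_of; eauto.
  - eapply notinS_of; eauto.
Qed.

Lemma G_path {T} (H : graph T) X SV : is_graph H ->
  (forall e z, In e X -> e z -> In z SV) ->
  forall a b, clos_refl_trans T (avoid_adj H SV) a b -> ~ In a SV ->
  forall e f, is_edge H e -> is_edge H f -> e a -> f b ->
  clos_refl_trans _ (avoid_adj (line_graph H) X) e f.
Proof.
  intros HG HX a b Hab. apply clos_rt_rt1n in Hab.
  induction Hab as [a|a a' b Hst Hrest IH]; intros Ha e f He Hf Hea Hfb.
  - eapply share_path; eauto.
  - destruct Hst as [Haa' [_ Ha']].
    assert (He' : is_edge H (edg a a')) by (exists a, a'; split; [exact Haa'|reflexivity]).
    eapply rt_trans.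
    + apply (share_path H X SV e (edg a a') a); auto. left; reflexivity.
    + apply IH; auto. right; reflexivity.
Qed.

Lemma D_lemma {T} (H : graph T) r s : is_graph H -> is_ray H r -> is_ray H s ->
  ray_equiv H r s -> ray_equiv (line_graph H) (Eray r) (Eray s).
Proof.
  intros HG Hr Hs Hrs X HX.
  destruct (endpoints_list H X HG HX) as [SV [HSV HXSV]].
  destruct (Hrs SV HSV) as [v [Hv [HvS [[k1 Hr1] [k2 Hs2]]]]].
  assert (HE : forall q n, is_ray H q -> is_edge H (Eray q n)).
  { intros q n [_ [Ha _]]. exists (q n), (q (S n)); split; [apply Ha|reflexivity]. }
  destruct (Hr1 k1 (le_n _)) as [_ [Hk1 Pk1]].
  assert (Psym : forall x, clos_refl_trans T (avoid_adj H SV) v x ->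
                  clos_refl_trans T (avoid_adj H SV) x v).
  { intros x; apply crt_sym; apply avoid_sym; exact (proj1 HG). }
  exists (Eray r k1). split; [apply HE; exact Hr|split].
  - eapply notinS_of; [exact HXSV| |exact Hk1]. left; reflexivity.
  - split.
    + exists k1. intros n Hn. destruct (Hr1 n Hn) as [_ [Hn1 Pn]].
      split; [apply HE; exact Hr|split].
      * eapply notinS_of; [exact HXSV| |exact Hn1]. left; reflexivity.
      * apply (G_path H X SV HG HXSV (r k1) (r n)); [| exact Hk1 | apply HE; exact Hr | apply HE; exact Hr | left; reflexivity | left; reflexivity].
        eapply rt_trans; [apply Psym; exact Pk1|exact Pn].
    + exists k2. intros n Hn. destruct (Hs2 n Hn) as [_ [Hn1 Pn]].
      split; [apply HE; exact Hs|split].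
      * eapply notinS_of; [exact HXSV| |exact Hn1]. left; reflexivity.
      * apply (G_path H X SV HG HXSV (r k1) (s n)); [| exact Hk1 | apply HE; exact Hr | apply HE; exact Hs | left; reflexivity | left; reflexivity].
        eapply rt_trans; [apply Psym; exact Pk1|exact Pn].
Qed.

Lemma edges_at_list {T} (H : graph T) x (l : list T) :
  exists X1, (forall e, In e X1 -> is_edge H e) /\ (forall y, In y l -> adj H x y -> In (edg x y) X1).
Proof.
  induction l as [|y l [X1 [A B]]].
  - exists nil; split; [intros e []|intros y []].
  - destruct (classic (adj H x y)) as [Hxy|Hn].
    + exists (edg x y :: X1). split.
      * intros e [<-|He]; [exists x, y; split; [exact Hxy|reflexivity]|auto].
      * intros z [<-|Hz] Hxz; [left; reflexivity|right; auto].
    + exists X1. split; [exact A|]. intros z [<-|Hz] Hxz; [contradiction|auto].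
Qed.

Lemma incident_list {T} (H : graph T) (SV : list T) : is_graph H -> locally_finite H ->
  (forall x, In x SV -> vtx H x) ->
  exists X, (forall e, In e X -> is_edge H e) /\
    (forall e x, is_edge H e -> e x -> In x SV -> In e X).
Proof.
  intros HG Hlf. induction SV as [|x SV IH]; intros HSV.
  - exists nil; split; [intros e []|intros e x _ _ []].
  - destruct IH as [X [A B]]; [intros z Hz; apply HSV; right; exact Hz|].
    destruct (Hlf x (HSV x (or_introl eq_refl))) as [l Hl].
    destruct (edges_at_list H x l) as [X1 [C D]].
    exists (X1 ++ X). split.
    + intros e He; apply in_app_or in He; destruct He; auto.
    + intros e z He Hez Hz. apply in_or_app. destruct Hz as [Hxz|Hz]; [left|right; eauto].
      subst z. destruct He as [a [b [Hab ->]]]. destruct Hez as [Ea | Eb].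
      * subst a. change (In (edg x b) X1). apply D; [apply Hl; exact Hab | exact Hab].
      * subst b. change (In (edg a x) X1). rewrite edg_sym.
        apply D; [apply Hl; apply (proj1 HG); exact Hab | apply (proj1 HG); exact Hab].
Qed.

Lemma within_edge {T} (H : graph T) X SV e a b : is_graph H ->
  (forall e x, is_edge H e -> e x -> In x SV -> In e X) ->
  is_edge H e -> ~ In e X -> e a -> e b -> clos_refl_trans T (avoid_adj H SV) a b.
Proof.
  intros [Hs _] HX He Hn Ha Hb.
  assert (Hout : forall z, e z -> ~ In z SV) by (intros z Hz Hin; apply Hn; eapply HX; eauto).
  pose proof He as [x [y [Hxy Heq]]].
  assert (Ha' := Ha). assert (Hb' := Hb). rewrite Heq in Ha', Hb'.
  destruct Ha' as [-> | ->]; destruct Hb' as [-> | ->].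
  - apply rt_refl.
  - apply rt_step. split; [exact Hxy|split; apply Hout; assumption].
  - apply rt_step. split; [apply Hs; exact Hxy|split; apply Hout; assumption].
  - apply rt_refl.
Qed.

Lemma H_path {T} (H : graph T) X SV : is_graph H ->
  (forall e x, is_edge H e -> e x -> In x SV -> In e X) ->
  forall e f, clos_refl_trans _ (avoid_adj (line_graph H) X) e f ->
  is_edge H e -> ~ In e X -> forall a b, e a -> f b ->
  clos_refl_trans T (avoid_adj H SV) a b.
Proof.
  intros HG HX e f Hef. apply clos_rt_rt1n in Hef.
  induction Hef as [e|e e' f Hst Hrest IH]; intros He Hn a b Ha Hb.
  - eapply within_edge; eauto.
  - destruct Hst as [[_ [He' [_ [x [Hex He'x]]]]] [_ Hn']].
    eapply rt_trans; [eapply (within_edge H X SV e a x); eauto|].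
    eapply IH; eauto.
Qed.

Lemma E_lemma {T} (G : graph T) r s : is_graph G -> locally_finite G -> is_ray G r -> is_ray G s ->
  ray_equiv (line_graph G) (Eray r) (Eray s) -> ray_equiv G r s.
Proof.
  intros HG Hlf Hr Hs Heq SV HSV.
  destruct (incident_list G SV HG Hlf HSV) as [X [HXe HXi]].
  destruct (Heq X HXe) as [V [HV [HVX [[k1 H1] [k2 H2]]]]].
  pose proof HV as [x [y [Hxy HVeq]]].
  assert (HVx : V x) by (rewrite HVeq; left; reflexivity).
  assert (HE : forall q n, is_ray G q -> is_edge G (Eray q n)).
  { intros q n [_ [Ha _]]. exists (q n), (q (S n)); split; [apply Ha|reflexivity]. }
  exists x. split; [exact (proj1 (proj2 (proj2 HG) x y Hxy))|split].
  - intro Hin. apply HVX. apply (HXi V x HV HVx Hin).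
  - split.
    + exists k1. intros n Hn. destruct (H1 n Hn) as [_ [HnX Pn]]. split; [apply (proj1 Hr)|split].
      * intro Hin. apply HnX. apply (HXi (Eray r n) (r n)); [apply HE; exact Hr| left; reflexivity | exact Hin].
      * apply (H_path G X SV HG HXi V (Eray r n) Pn HV HVX x (r n)); [exact HVx| left; reflexivity].
    + exists k2. intros n Hn. destruct (H2 n Hn) as [_ [HnX Pn]]. split; [apply (proj1 Hs)|split].
      * intro Hin. apply HnX. apply (HXi (Eray s n) (s n)); [apply HE; exact Hs| left; reflexivity | exact Hin].
      * apply (H_path G X SV HG HXi V (Eray s n) Pn HV HVX x (s n)); [exact HVx| left; reflexivity].
Qed.

Lemma sublist_vtx {T} (A : graph T) (X : list T) : exists X', (forall x, In x X' -> vtx A x) /\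
  (forall x, In x X -> vtx A x -> In x X') /\ (forall x, In x X' -> In x X).
Proof.
  induction X as [|a X [X' [P1 [P2 P3]]]].
  - exists nil; split; [|split]; intros x [].
  - destruct (classic (vtx A a)) as [Ha|Ha].
    + exists (a :: X'). split; [|split].
      * intros x [<-|Hx]; auto.
      * intros x [<-|Hx] Hv; [left; reflexivity| right; auto].
      * intros x [<-|Hx]; [left; reflexivity|right; auto].
    + exists X'. split; [exact P1|split].
      * intros x [<-|Hx] Hv; [contradiction|auto].
      * intros x Hx; right; auto.
Qed.

Lemma mono {T} (A B : graph T) r s : is_graph A -> subgraph A B -> ray_equiv A r s -> ray_equiv B r s.
Proof.
  intros [_ [_ HAv]] [Hsv Hsa] Hrs X HX.
  destruct (sublist_vtx A X) as [X' [P1 [P2 P3]]].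
  destruct (Hrs X' P1) as [v [Hv [HvX [[k1 H1] [k2 H2]]]]].
  assert (Hc : forall x, in_comp A X' v x -> in_comp B X v x).
  { intros x [Hx [HxX Hp]]. split; [auto|split].
    - intro Hin. apply HxX. apply P2; auto.
    - clear - Hp HAv Hsa P2. induction Hp as [x y Hxy| x | x y z _ IH1 _ IH2].
      + apply rt_step. destruct Hxy as [Hxy [Hx Hy]]. destruct (HAv _ _ Hxy).
        split; [auto|split; intro Hin; [apply Hx|apply Hy]; apply P2; auto].
      + apply rt_refl.
      + eapply rt_trans; eauto. }
  exists v. split; [auto|split; [intro Hin; apply HvX; apply P2; auto|split]].
  - exists k1; intros n Hn; apply Hc; auto.
  - exists k2; intros n Hn; apply Hc; auto.
Qed.

Lemma ray_sub {T} (A B : graph T) r : subgraph A B -> is_ray A r -> is_ray B r.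
Proof. intros [Hv Ha] [H1 [H2 H3]]. split; [auto|split; auto]. Qed.

Lemma lg_subgraph {T} (A B : graph T) : subgraph A B -> subgraph (line_graph A) (line_graph B).
Proof.
  intros [Hv Ha].
  assert (HE : forall e, is_edge A e -> is_edge B e) by (intros e [x [y [Hxy Heq]]]; exists x, y; auto).
  split; [exact HE|]. intros e f [P1 [P2 P3]]. split; [auto|split; auto].
Qed.

Lemma lf_sub {T} (A B : graph T) : locally_finite B -> subgraph A B -> locally_finite A.
Proof. intros Hlf [Hv Ha] v Hvv. destruct (Hlf v (Hv v Hvv)) as [l Hl]. exists l; auto. Qed.

Lemma choice_nat {A : Type} (P : nat -> A -> Prop) : (forall n, exists a, P n a) -> exists f : nat -> A, forall n, P n (f n).
Proof.
  intro H. exists (fun n => proj1_sig (constructive_indefinite_description _ (H n))).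
  intro n. exact (proj2_sig (constructive_indefinite_description _ (H n))).
Qed.

Lemma max_exists (P : nat -> Prop) N j : P j -> (forall p, P p -> p < N) ->
  exists m, P m /\ forall p, P p -> p <= m.
Proof.
  revert j. induction N as [|N IH]; intros j Hj HN.
  - specialize (HN j Hj); lia.
  - destruct (classic (P N)) as [HP|HP].
    + exists N; split; [exact HP|]. intros p Hp; specialize (HN p Hp); lia.
    + apply (IH j Hj). intros p Hp. specialize (HN p Hp).
      destruct (Nat.eq_dec p N); [subst; contradiction|lia].
Qed.

Fixpoint iseq (Lf : nat -> nat) (k : nat) : nat :=
  match k with 0 => Lf 0 | S k' => Lf (S (iseq Lf k')) end.

Lemma C_lemma {T} (H : graph T) R : is_graph H -> locally_finite H -> is_ray (line_graph H) R ->
  exists r, is_ray H r /\ ray_equiv (line_graph H) (Eray r) R.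
Proof.
  intros HG Hlf HR. pose proof HG as [Hsym [Hirr Hvx]].
  pose proof HR as [HRv [HRa HRi]].
  destruct (choice_nat (fun n x => R n x /\ R (S n) x)) as [w Hw].
  { intro n. destruct (HRa n) as [_ [_ [_ [x Hx]]]]. exists x; exact Hx. }
  assert (Hstep : forall n, w n = w (S n) \/ adj H (w n) (w (S n))).
  { intro n. destruct (HRv (S n)) as [a [b [Hab Heq]]].
    pose proof (proj2 (Hw n)) as H1. pose proof (proj1 (Hw (S n))) as H2. rewrite Heq in H1, H2.
    destruct H1 as [E1| E1]; destruct H2 as [E| E]; rewrite E1, E; auto. }
  assert (Hocc : forall x, exists N, forall n, N <= n -> ~ R n x).
  { intro x. destruct (classic (vtx H x)) as [Hx|Hx].
    2: { exists 0. intros n _ Hn. apply Hx. eapply edge_vtx; [exact HG|apply HRv|exact Hn]. }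
    destruct (Hlf x Hx) as [l Hl].
    assert (Hone : forall y, y <> x -> exists N, forall n, N <= n -> ~ (R n x /\ R n y)).
    { intros y Hyx. destruct (classic (exists m, R m x /\ R m y)) as [[m Hm]|Hno].
      - exists (S m). intros n Hn Hnxy.
        assert (Enm : R n = R m).
        { rewrite (edge_two H (R n) x y (HRv n) (proj1 Hnxy) (proj2 Hnxy)); [|congruence].
          rewrite (edge_two H (R m) x y (HRv m) (proj1 Hm) (proj2 Hm)); [|congruence]. reflexivity. }
        apply HRi in Enm. lia.
      - exists 0. intros n _ Hn. apply Hno; eauto. }
    assert (Hall : forall l', exists N, forall n, N <= n -> forall y, In y l' -> y <> x -> ~ (R n x /\ R n y)).
    { induction l' as [|y l' [N IH]].
      - exists 0. intros n _ y [].
      - destruct (classic (y = x)) as [Hyx|Hyx].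
        + exists N. intros n Hn z [Ez|Hz] Hzx; [subst; contradiction|apply IH; auto].
        + destruct (Hone y Hyx) as [N' HN']. exists (Nat.max N N').
          intros n Hn z [Ez|Hz] Hzx; [subst z; apply HN'; lia | apply IH; auto; lia]. }
    destruct (Hall l) as [N HN]. exists N. intros n Hn Hnx.
    pose proof (HRv n) as [a [b [Hab Heq]]].
    assert (Hn' := Hnx). rewrite Heq in Hn'. destruct Hn' as [Ea | Eb].
    + subst x. apply (HN n Hn b); [apply Hl; exact Hab | intro E'; rewrite E' in Hab; exact (Hirr _ Hab) | split; [exact Hnx| rewrite Heq; right; reflexivity]].
    + subst x. apply (HN n Hn a); [apply Hl; apply Hsym; exact Hab | intro E'; rewrite E' in Hab; exact (Hirr _ Hab) | split; [exact Hnx| rewrite Heq; left; reflexivity]]. }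
  assert (Hlast : forall j, exists m, (j <= m /\ w m = w j) /\ forall p, w p = w j -> p <= m).
  { intro j. destruct (Hocc (w j)) as [N HN].
    destruct (max_exists (fun p => w p = w j) N j eq_refl) as [m [Hm1 Hm2]].
    - intros p Hp. destruct (Nat.lt_ge_cases p N) as [|Hge]; [assumption|].
      exfalso. apply (HN p Hge). rewrite <- Hp. exact (proj1 (Hw p)).
    - exists m. split; [split; [apply Hm2; reflexivity|exact Hm1]|exact Hm2]. }
  destruct (choice_nat (fun j m => (j <= m /\ w m = w j) /\ forall p, w p = w j -> p <= m) Hlast) as [Lf HL].
  assert (Hil : forall k p, w p = w (iseq Lf k) -> p <= iseq Lf k).
  { assert (G0 : forall j p, w p = w (Lf j) -> p <= Lf j).
    { intros j p Hp. destruct (HL j) as [[_ E] Hm]. apply Hm. rewrite Hp; exact E. }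
    intros [|k] p Hp; simpl in *; apply G0; exact Hp. }
  assert (Hisucc : forall k, S (iseq Lf k) <= iseq Lf (S k)).
  { intro k. simpl. apply (proj1 (proj1 (HL _))). }
  assert (Hmono : forall k m, k < m -> iseq Lf k < iseq Lf m).
  { intros k m; induction m as [|m IH]; intro Hkm; [lia|].
    specialize (Hisucc m). destruct (Nat.eq_dec k m); [subst; lia|].
    assert (iseq Lf k < iseq Lf m) by (apply IH; lia). lia. }
  assert (Hge : forall k, k <= iseq Lf k).
  { induction k; [lia|]. specialize (Hisucc k). lia. }
  assert (Hkey : forall k, w (iseq Lf (S k)) = w (S (iseq Lf k))).
  { intro k. simpl. apply (proj2 (proj1 (HL _))). }
  set (r := fun k => w (iseq Lf k)).
  assert (Hradj : forall k, adj H (r k) (r (S k))).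
  { intro k. unfold r. rewrite Hkey. destruct (Hstep (iseq Lf k)) as [E|E]; [|exact E].
    exfalso. specialize (Hil k (S (iseq Lf k)) (eq_sym E)). lia. }
  assert (Hray : is_ray H r).
  { split; [|split; [exact Hradj|]].
    - intro n. unfold r. eapply edge_vtx; [exact HG|apply HRv|exact (proj1 (Hw _))].
    - intros k m E. unfold r in E.
      pose proof (Hil k _ (eq_sym E)). pose proof (Hil m _ E).
      destruct (Nat.lt_trichotomy k m) as [Hl|[Hl|Hl]]; [apply Hmono in Hl; lia|exact Hl|apply Hmono in Hl; lia]. }
  assert (HER : forall k, Eray r k = R (S (iseq Lf k))).
  { intro k. symmetry. apply (edge_two H); [apply HRv| exact (proj2 (Hw _)) | | ].
    - unfold r. rewrite Hkey. exact (proj1 (Hw _)).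
    - intro E. apply (Hirr (r k)). pattern (r k) at 2. rewrite E. apply Hradj. }
  exists r. split; [exact Hray|].
  replace (Eray r) with (fun k => R (S (iseq Lf k))) by (apply functional_extensionality; intro k; symmetry; apply HER).
  apply ray_equiv_sym. apply ray_equiv_subseq; [exact HR|]. intro n. specialize (Hge n). lia.
Qed.

Theorem lemma27 (T : Type) (G F : graph T) :
  is_graph G -> is_graph F -> locally_finite G -> subgraph F G ->
  faithful F G -> faithful (line_graph F) (line_graph G).
Proof.
  intros HG HF Hlf Hsub [Hfi Hfii].
  assert (HlfF : locally_finite F) by (eapply lf_sub; eauto).
  assert (HLsub := lg_subgraph F G Hsub).
  assert (HsymG : forall x y, adj (line_graph G) x y -> adj (line_graph G) y x) by apply lg_sym.
  assert (HsymF : forall x y, adj (line_graph F) x y -> adj (line_graph F) y x) by apply lg_sym.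
  split.
  - intros R HR. destruct (C_lemma G R HG Hlf HR) as [r [Hr Hre]].
    destruct (Hfi r Hr) as [r' [Hr' Hre']].
    exists (Eray r'). split; [apply Eray_ray; exact Hr'|].
    eapply ray_equiv_trans; [exact HsymG| |exact Hre].
    apply D_lemma; [exact HG|eapply ray_sub; eauto|exact Hr|exact Hre'].
  - intros R S HR HS. split.
    + apply mono; [apply lg_is_graph|exact HLsub].
    + intro HRS.
      destruct (C_lemma F R HF HlfF HR) as [rF [HrF HreR]].
      destruct (C_lemma F S HF HlfF HS) as [sF [HsF HreS]].
      assert (E1 : ray_equiv (line_graph G) (Eray rF) (Eray sF)).
      { eapply ray_equiv_trans; [exact HsymG| apply (mono _ _ _ _ (lg_is_graph F) HLsub HreR)|].
        eapply ray_equiv_trans; [exact HsymG| exact HRS|].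
        apply ray_equiv_sym. apply (mono _ _ _ _ (lg_is_graph F) HLsub HreS). }
      assert (E2 : ray_equiv G rF sF).
      { apply E_lemma; auto; eapply ray_sub; eauto. }
      apply (proj2 (Hfii rF sF HrF HsF)) in E2.
      apply (D_lemma F rF sF HF HrF HsF) in E2.
      eapply ray_equiv_trans; [exact HsymF| apply ray_equiv_sym; exact HreR|].
      eapply ray_equiv_trans; [exact HsymF| exact E2| exact HreS].
Qed.
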